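(* Let $0<\alpha<1$, $\lambda\in\mathbb{R}$, $T>0$, integers $N,M\ge 2$, $\tau=T/N$, $h=(b-a)/M$, and grid points $x_i=a+ih$, $0\le i\le M$. Let $\{v_i^n\}$ ($0\le i\le M$, $0\le n\le N$) satisfy $$\mathcal{A}_x\delta_{t}^{\alpha,\lambda} v_i^{n}-\mathcal{A}_t^{\alpha}\delta_{x}^2v_i^{n}=S_i^{n},\quad 1\leq i\leq M-1,\ 1\leq n\leq N,$$ $$v^n_0=0,\quad v^n_M=0,\quad 1\le n\le N,\qquad v^0_i=v_0(x_i),\quad 0\le i\le M,$$ where $v_0(x_0)=v_0(x_M)=0$ and $S_i^n$ are given. If $2-\alpha-e^{\lambda\tau}\ge0$, then for $1<n\le N$, $$\|v^n\|^2\leq \frac{3}{2}e^{2|\lambda|T}\|v^{0}\|^2+\frac{3\Gamma(1-\alpha)T^{\alpha}e^{2|\lambda|T}}{C_{\Omega}} \max_{0\leq n\leq N}\|S^n\|^2,$$ where $\|S^n\|=\sqrt{h\sum_{i=1}^{M-1}(S_i^n)^2}$.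
   Context: $g_k^{\alpha}=(-1)^k\binom{\alpha}{k}$ are the coefficients of $(1-z)^{\alpha}=\sum_{k\ge0}g_k^{\alpha}z^k$ and $g_k^{\alpha,\lambda}=e^{-(k-\frac{\alpha}{2})\lambda\tau}g_k^{\alpha}$. Time operators (applied for each fixed $i$): $\delta_t^{\alpha,\lambda}v_i^n=\tau^{-\alpha}\sum_{k=0}^{n}g_k^{\alpha,\lambda}v_i^{n-k}$ and $\mathcal{A}_t^{\alpha}v_i^n=(1-\frac{\alpha}{2})v_i^n+\frac{\alpha}{2}v_i^{n-1}$. Space operators: $\delta_x^2v_i=h^{-2}(v_{i-1}-2v_i+v_{i+1})$, and $\mathcal{A}_xv_i=\frac{1}{12}(v_{i-1}+10v_i+v_{i+1})$ for $1\le i\le M-1$, $\mathcal{A}_xv_i=v_i$ for $i=0,M$. For grid functions $u,v$ on $\{x_0,\dots,x_M\}$ vanishing at $x_0,x_M$ (the space $V_h$), $(u,v)=h\sum_{i=1}^{M-1}u_iv_i$ and $\|v\|=\sqrt{(v,v)}$. $C_\Omega>0$ is a constant depending only on $\Omega=(a,b)$ (not on $h$) such that $-(\delta_x^2v,v)\ge C_\Omega\|v\|^2$ for all $v\in V_h$ and all mesh sizes $h$. *)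

(* Defs.v *)
From Stdlib Require Import Reals Lra Lia List Arith Factorial.
From Coquelicot Require Import Coquelicot.
Open Scope R_scope.

Definition Gamma (s : R) : R :=
  RInt_gen (fun t => Rpower t (s - 1) * exp (- t)) (at_right 0) (Rbar_locally p_infty).

Fixpoint falling (a : R) (k : nat) : R :=
  match k with
  | O => 1
  | S k' => falling a k' * (a - INR k')
  end.

Definition gbinom (a : R) (k : nat) : R := falling a k / INR (Factorial.fact k).

Definition g (alpha : R) (k : nat) : R := (-1) ^ k * gbinom alpha k.

Definition gl (alpha lambda tau : R) (k : nat) : R :=
  exp (- (INR k - alpha / 2) * lambda * tau) * g alpha k.

(* Grid functions are v : nat -> nat -> R, with v n i = v_i^n. *)

Definition dt (alpha lambda tau : R) (v : nat -> nat -> R) (n i : nat) : R :=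
  Rpower tau (- alpha) * sum_n (fun k => gl alpha lambda tau k * v (n - k)%nat i) n.

Definition At (alpha : R) (v : nat -> nat -> R) (n i : nat) : R :=
  (1 - alpha / 2) * v n i + alpha / 2 * v (n - 1)%nat i.

Definition d2x (h : R) (w : nat -> R) (i : nat) : R :=
  (w (i - 1)%nat - 2 * w i + w (i + 1)%nat) / (h ^ 2).

Definition Ax (M : nat) (w : nat -> R) (i : nat) : R :=
  if andb (1 <=? i)%nat (i <=? M - 1)%nat
  then (w (i - 1)%nat + 10 * w i + w (i + 1)%nat) / 12
  else w i.

Definition ip (h : R) (M : nat) (u w : nat -> R) : R :=
  h * sum_n_m (fun i => u i * w i) 1 (M - 1).

Definition nrm2 (h : R) (M : nat) (u : nat -> R) : R := ip h M u u.

Definition nrm (h : R) (M : nat) (u : nat -> R) : R := sqrt (nrm2 h M u).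

Definition maxn0 (f : nat -> R) (N : nat) : R :=
  fold_right Rmax (f O) (map f (seq 0 (S N))).

(* Main.v *)
Require Import Defs.
From Stdlib Require Import Reals Lra Lia List.
From Coquelicot Require Import Coquelicot.
Open Scope R_scope.


Definition ff (s t : R) : R := Rpower t (s - 1) * exp (- t).

Lemma d_pow (c x : R) : 0 < x -> is_derive (fun t => Rpower t c) x (c * Rpower x (c - 1)).
Proof. intros Hx. apply is_derive_Reals. now apply derivable_pt_lim_power. Qed.

Lemma d_pow_k (c k x : R) : 0 < x -> is_derive (fun t => k * Rpower t c) x (k * (c * Rpower x (c - 1))).
Proof.
  intros Hx. apply is_derive_Reals.
  apply (derivable_pt_lim_scal (fun t => Rpower t c) k x). now apply derivable_pt_lim_power.
Qed.

Lemma is_derive_eq (F : R -> R) x l l' : is_derive F x l -> l = l' -> is_derive F x l'.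
Proof. intros; subst; auto. Qed.

Lemma cont_pow (c x : R) : 0 < x -> continuous (fun t => Rpower t c) x.
Proof. intros Hx. apply (ex_derive_continuous (fun t => Rpower t c)). eexists. now apply d_pow. Qed.

Lemma Rpower_pos' (x c : R) : 0 < Rpower x c.
Proof. unfold Rpower. apply exp_pos. Qed.

Lemma Rpower_1_base (c : R) : Rpower 1 c = 1.
Proof. unfold Rpower. rewrite ln_1, Rmult_0_r. apply exp_0. Qed.

Lemma ff_cont (s z : R) : 0 < z -> continuous (ff s) z.
Proof.
  intros Hz. unfold ff. apply (continuous_mult (fun t => Rpower t (s-1)) (fun t => exp (-t))).
  - now apply cont_pow.
  - apply (ex_derive_continuous (fun t => exp (- t))). auto_derive. auto.
Qed.

Lemma ex_RInt_pos (f : R -> R) (x y : R) : 0 < x -> 0 < y ->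
  (forall z, 0 < z -> continuous f z) -> ex_RInt f x y.
Proof.
  intros Hx Hy Hc. apply (ex_RInt_continuous (V:=R_CompleteNormedModule)). intros z Hz. apply Hc.
  assert (0 < Rmin x y) by (apply Rmin_glb_lt; auto). lra.
Qed.

Lemma ff_ex (s x y : R) : 0 < x -> 0 < y -> ex_RInt (ff s) x y.
Proof. intros. apply ex_RInt_pos; auto. intros; now apply ff_cont. Qed.

Lemma ff_nonneg (s t : R) : 0 < t -> 0 <= ff s t.
Proof. intros. unfold ff. apply Rmult_le_pos; left; [apply Rpower_pos'|apply exp_pos]. Qed.

Definition FF (s x : R) : R := RInt (ff s) 1 x.

Lemma FF_diff (s x y : R) : 0 < x -> 0 < y -> FF s y - FF s x = RInt (ff s) x y.
Proof.
  intros Hx Hy. unfold FF.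
  rewrite <- (RInt_Chasles (ff s) 1 x y); try (apply ff_ex; lra).
  change (plus ?a ?b) with (a + b). ring.
Qed.

Lemma FF_mono (s x y : R) : 0 < x -> x <= y -> FF s x <= FF s y.
Proof.
  intros Hx Hxy. assert (0 <= FF s y - FF s x); [|lra].
  rewrite FF_diff by lra. apply RInt_ge_0; auto. apply ff_ex; lra.
  intros z Hz. apply ff_nonneg. lra.
Qed.

Lemma RInt_of_deriv (F f : R -> R) (a b : R) : 0 < a -> 0 < b ->
  (forall x, 0 < x -> is_derive F x (f x)) -> (forall x, 0 < x -> continuous f x) ->
  RInt f a b = F b - F a.
Proof.
  intros Ha Hb Hd Hc. apply is_RInt_unique.
  apply (is_RInt_derive F f a b).
  - intros x Hx. apply Hd. assert (0 < Rmin a b) by (apply Rmin_glb_lt; auto). lra.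
  - intros x Hx. apply Hc. assert (0 < Rmin a b) by (apply Rmin_glb_lt; auto). lra.
Qed.

Lemma Rpower_shift (t c : R) : 0 < t -> Rpower t (c + 1) = Rpower t c * t.
Proof. intros Ht. rewrite Rpower_plus, Rpower_1; auto. Qed.

Lemma FF_lower (al x : R) : 0 < al < 1 -> 0 < x <= 1 -> - (1 / (1 - al)) <= FF (1 - al) x.
Proof.
  intros Ha Hx.
  assert (E : FF (1 - al) x = - RInt (ff (1 - al)) x 1).
  { unfold FF. rewrite <- opp_RInt_swap by (apply ff_ex; lra). reflexivity. }
  rewrite E. apply Ropp_le_contravar.
  apply Rle_trans with (RInt (fun t => Rpower t (1 - al - 1)) x 1).
  - apply RInt_le; try lra. apply ff_ex; lra.
    apply ex_RInt_pos; try lra. intros; now apply cont_pow.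
    intros t Ht. unfold ff. rewrite <- (Rmult_1_r (Rpower t (1 - al - 1))) at 2.
    apply Rmult_le_compat_l. left; apply Rpower_pos'.
    rewrite <- exp_0. destruct (Req_dec t 0); [lra|]. left. apply exp_increasing. lra.
  - rewrite (RInt_of_deriv (fun t => / (1 - al) * Rpower t (1 - al))); try lra.
    + rewrite Rpower_1_base. assert (0 < Rpower x (1 - al)) by apply Rpower_pos'.
      apply Rmult_le_reg_r with (1 - al). lra. field_simplify; lra.
    + intros t Ht. apply (is_derive_eq _ _ _ _ (d_pow_k (1 - al) (/ (1 - al)) t Ht)). rewrite <- Rmult_assoc, Rinv_l, Rmult_1_l; [reflexivity|lra].
    + intros; now apply cont_pow.
Qed.

Lemma FF_upper (al y : R) : 0 < al < 1 -> 1 <= y -> FF (1 - al) y <= 1.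
Proof.
  intros Ha Hy. unfold FF.
  apply Rle_trans with (RInt (fun t => exp (- t)) 1 y).
  - apply RInt_le; try lra. apply ff_ex; lra.
    apply ex_RInt_pos; try lra. intros. apply (ex_derive_continuous (fun t => exp (- t))). auto_derive; auto.
    intros t Ht. unfold ff. rewrite <- (Rmult_1_l (exp (- t))) at 2.
    apply Rmult_le_compat_r. left; apply exp_pos.
    unfold Rpower. rewrite <- exp_0. replace (1 - al - 1) with (- al) by ring.
    assert (0 < ln t) by (rewrite <- ln_1; apply ln_increasing; lra).
    left. apply exp_increasing. nra.
  - rewrite (RInt_of_deriv (fun t => - exp (- t))); try lra.
    + assert (0 < exp (- y)) by apply exp_pos. assert (exp (- (1)) <= 1).
      { assert (exp (- (1)) < exp 0) by (apply exp_increasing; lra). rewrite exp_0 in H0. lra. } lra.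
    + intros t Ht. auto_derive; auto. ring.
    + intros. apply (ex_derive_continuous (fun t => exp (- t))). auto_derive; auto.
Qed.

Lemma lim_right0 (F : R -> R) (B : R) :
  (forall x y, 0 < x -> x <= y -> F x <= F y) -> (forall x, 0 < x <= 1 -> B <= F x) ->
  exists l, filterlim F (at_right 0) (locally l) /\ (forall x, 0 < x -> l <= F x).
Proof.
  intros Hm Hb.
  set (E := fun z => exists x, 0 < x <= 1 /\ z = - F x).
  assert (HE : bound E). { exists (- B). intros z [x [Hx ->]]. specialize (Hb x Hx). lra. }
  assert (HE2 : exists z, E z). { exists (- F 1). exists 1. split; [lra|auto]. }
  destruct (completeness E HE HE2) as [m [Hub Hlub]].
  exists (- m). split.
  - apply filterlim_locally. intros eps.
    assert (Hex : exists x0, 0 < x0 <= 1 /\ F x0 < - m + eps).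
    { apply Classical_Pred_Type.not_all_not_ex. intros Hn.
      assert (is_upper_bound E (m - eps)).
      { intros z [x [Hx ->]]. specialize (Hn x). apply Classical_Prop.not_and_or in Hn.
        destruct Hn; [contradiction|lra]. }
      specialize (Hlub _ H). destruct eps; simpl in *; lra. }
    destruct Hex as [x0 [Hx0 Hx0']].
    exists (mkposreal x0 (proj1 Hx0)). intros y Hy Hy0. simpl in Hy.
    unfold ball in Hy; simpl in Hy; unfold AbsRing_ball in Hy; simpl in Hy.
    unfold abs, minus, plus, opp in Hy; simpl in Hy.
    rewrite Ropp_0, Rplus_0_r in Hy. rewrite Rabs_right in Hy by lra.
    unfold ball; simpl; unfold AbsRing_ball; simpl. unfold abs, minus, plus, opp; simpl.
    assert (Hl : - m <= F y). { assert (E (- F y)) by (exists y; split; [lra|auto]). apply Hub in H. lra. }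
    assert (F y <= F x0) by (apply Hm; lra).
    rewrite Rabs_right by lra. lra.
  - intros x Hx. destruct (Rle_dec x 1).
    + assert (E (- F x)) by (exists x; split; [lra|auto]). apply Hub in H. lra.
    + assert (E (- F 1)) by (exists 1; split; [lra|auto]). apply Hub in H.
      assert (F 1 <= F x) by (apply Hm; lra). lra.
Qed.

Lemma lim_infty (F : R -> R) (B : R) :
  (forall x y, 0 < x -> x <= y -> F x <= F y) -> (forall x, 1 <= x -> F x <= B) ->
  exists l, filterlim F (Rbar_locally p_infty) (locally l) /\ (forall x, 0 < x -> F x <= l).
Proof.
  intros Hm Hb.
  set (E := fun z => exists x, 1 <= x /\ z = F x).
  assert (HE : bound E). { exists B. intros z [x [Hx ->]]. now apply Hb. }
  assert (HE2 : exists z, E z). { exists (F 1). exists 1. split; [lra|auto]. }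
  destruct (completeness E HE HE2) as [m [Hub Hlub]].
  exists m. split.
  - apply filterlim_locally. intros eps.
    assert (Hex : exists x0, 1 <= x0 /\ m - eps < F x0).
    { apply Classical_Pred_Type.not_all_not_ex. intros Hn.
      assert (is_upper_bound E (m - eps)).
      { intros z [x [Hx ->]]. specialize (Hn x). apply Classical_Prop.not_and_or in Hn.
        destruct Hn; [contradiction|lra]. }
      specialize (Hlub _ H). destruct eps; simpl in *; lra. }
    destruct Hex as [x0 [Hx0 Hx0']].
    exists x0. intros y Hy.
    unfold ball; simpl; unfold AbsRing_ball; simpl. unfold abs, minus, plus, opp; simpl.
    assert (Hl : F y <= m). { assert (E (F y)) by (exists y; split; [lra|auto]). apply Hub in H. lra. }
    assert (F x0 <= F y) by (apply Hm; lra).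
    rewrite Rabs_left1 by lra. lra.
  - intros x Hx. destruct (Rle_dec 1 x).
    + assert (E (F x)) by (exists x; split; [lra|auto]). apply Hub in H. lra.
    + assert (E (F 1)) by (exists 1; split; [lra|auto]). apply Hub in H.
      assert (F x <= F 1) by (apply Hm; lra). lra.
Qed.

Lemma ball_R (x e y : R) : ball x e y <-> Rabs (y - x) < e.
Proof. unfold ball; simpl; unfold AbsRing_ball; simpl. unfold abs, minus, plus, opp; simpl. tauto. Qed.

Lemma Gamma_is (al : R) : 0 < al < 1 ->
  exists l0 linf, Gamma (1 - al) = linf - l0 /\ (forall x, 0 < x -> l0 <= FF (1 - al) x)
     /\ (forall x, 0 < x -> FF (1 - al) x <= linf).
Proof.
  intros Ha.
  destruct (lim_right0 (FF (1 - al)) (- (1 / (1 - al)))) as [l0 [Hl0 Hl0']].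
  { intros; now apply FF_mono. } { intros; now apply FF_lower. }
  destruct (lim_infty (FF (1 - al)) 1) as [li [Hli Hli']].
  { intros; now apply FF_mono. } { intros; apply FF_upper; auto. }
  exists l0, li. split; [|split; auto].
  apply is_RInt_gen_unique.
  unfold is_RInt_gen.
  apply filterlimi_lim_ext_loc with (f := fun ab => FF (1 - al) (snd ab) - FF (1 - al) (fst ab)).
  - apply Filter_prod with (fun x => 0 < x) (fun x => 0 < x).
    + exists (mkposreal 1 Rlt_0_1). intros; auto.
    + exists 0. intros; auto.
    + intros x y Hx Hy. simpl. rewrite FF_diff by auto. apply (RInt_correct (V:=R_CompleteNormedModule)). apply ff_ex; auto.
  - apply filterlim_locally. intros eps.
    assert (He2 : 0 < eps / 2) by (destruct eps; simpl; lra).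
    apply filterlim_locally with (eps := mkposreal _ He2) in Hl0.
    apply filterlim_locally with (eps := mkposreal _ He2) in Hli.
    apply Filter_prod with (1 := Hl0) (2 := Hli).
    intros x y Hx Hy. simpl in *. rewrite ball_R in *.
    replace (FF (1 - al) y - FF (1 - al) x - (li - l0)) with
      ((FF (1 - al) y - li) - (FF (1 - al) x - l0)) by ring.
    eapply Rle_lt_trans. apply Rabs_triang. rewrite Rabs_Ropp. lra.
Qed.

Lemma Gamma_lb (al : R) : 0 < al < 1 -> 1 / (2 * (1 - al) * (2 - al)) <= Gamma (1 - al).
Proof.
  intros Ha. destruct (Gamma_is al Ha) as [l0 [li [HG [H0 Hi]]]].
  set (ep := Rpower (/ 4) (/ (1 - al))).
  assert (Hep : 0 < ep) by apply Rpower_pos'.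
  assert (Hep1 : Rpower ep (1 - al) = / 4).
  { unfold ep. rewrite Rpower_mult. rewrite Rinv_l by lra. apply Rpower_1. lra. }
  assert (Hepl : ep <= 1).
  { unfold ep. unfold Rpower.
    assert (ln (/ 4) < 0) by (rewrite <- ln_1; apply ln_increasing; lra).
    assert (0 < / (1 - al)) by (apply Rinv_0_lt_compat; lra).
    assert (Hq : exp (/ (1 - al) * ln (/ 4)) < exp 0) by (apply exp_increasing; nra).
    rewrite exp_0 in Hq. lra. }
  specialize (H0 ep Hep). specialize (Hi 1 Rlt_0_1).
  assert (HF1 : FF (1 - al) 1 = 0) by (unfold FF; apply (RInt_point (V:=R_CompleteNormedModule))).
  assert (HFe : FF (1 - al) ep = - RInt (ff (1 - al)) ep 1).
  { unfold FF. rewrite <- opp_RInt_swap by (apply ff_ex; lra). reflexivity. }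
  assert (HR : 1 / ((1 - al) * (2 - al)) - / 4 / (1 - al) <= RInt (ff (1 - al)) ep 1).
  { apply Rle_trans with (RInt (fun t => Rpower t (1 - al - 1) * (1 - t)) ep 1).
    - rewrite (RInt_of_deriv (fun t => / (1 - al) * Rpower t (1 - al) + (- / (2 - al)) * Rpower t (2 - al))); try lra.
      + rewrite !Rpower_1_base, Hep1.
        assert (0 < Rpower ep (2 - al)) by apply Rpower_pos'.
        assert (0 < / (2 - al)) by (apply Rinv_0_lt_compat; lra).
        assert (Hx : 1 / ((1 - al) * (2 - al)) = / (1 - al) * 1 + - / (2 - al) * 1) by (field; lra).
        rewrite Hx. assert (/ 4 / (1 - al) = / (1 - al) * / 4) by (field; lra). rewrite H2.
        assert (0 < / (2 - al) * Rpower ep (2 - al)) by (apply Rmult_lt_0_compat; auto). lra.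
      + intros t Ht.
        apply (is_derive_eq _ _ _ _ (is_derive_plus _ _ _ _ _ (d_pow_k (1 - al) (/ (1 - al)) t Ht) (d_pow_k (2 - al) (- / (2 - al)) t Ht))).
        simpl. unfold plus; simpl.
        replace (2 - al - 1) with ((1 - al - 1) + 1) by ring. rewrite Rpower_shift by auto.
        field. lra.
      + intros x Hx. apply (continuous_mult (fun t => Rpower t (1 - al - 1)) (fun t => 1 - t)).
        now apply cont_pow. apply (ex_derive_continuous (fun t => 1 - t)). auto_derive; auto.
    - apply RInt_le; try lra.
      + apply ex_RInt_pos; try lra. intros x Hx. apply (continuous_mult (fun t => Rpower t (1 - al - 1)) (fun t => 1 - t)).
        now apply cont_pow. apply (ex_derive_continuous (fun t => 1 - t)). auto_derive; auto.
      + apply ff_ex; lra.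
      + intros t Ht. unfold ff. apply Rmult_le_compat_l. left; apply Rpower_pos'.
        generalize (exp_ineq1_le (- t)). lra. }
  assert (Hgoal : 1 / (2 * (1 - al) * (2 - al)) <= 1 / ((1 - al) * (2 - al)) - / 4 / (1 - al)).
  { assert (0 < 1 - al) by lra. assert (0 < 2 - al) by lra.
    apply Rmult_le_reg_r with (4 * (1 - al) * (2 - al)). nra. field_simplify; try lra. }
  lra.
Qed.


Lemma Rpower_1_base' (c : R) : Rpower 1 c = 1.
Proof. unfold Rpower. rewrite ln_1, Rmult_0_r. apply exp_0. Qed.

Lemma g_0 al : g al 0 = 1.
Proof. unfold g, gbinom. simpl. field. Qed.

Lemma g_S al k : g al (S k) = g al k * (INR k - al) / (INR k + 1).
Proof.
  unfold g, gbinom. change (falling al (S k)) with (falling al k * (al - INR k)).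
  change (Factorial.fact (S k)) with (S k * Factorial.fact k)%nat.
  rewrite mult_INR, S_INR. change ((-1) ^ S k) with (-1 * (-1) ^ k).
  assert (INR (Factorial.fact k) <> 0) by apply INR_fact_neq_0.
  assert (0 <= INR k) by apply pos_INR.
  field. lra.
Qed.

Lemma g_1 al : g al 1 = - al.
Proof. rewrite g_S, g_0. simpl. field. Qed.

Definition ss al n : R := sum_n (g al) n.

Ltac fixR := match goal with |- @eq _ ?x ?y => change (@eq R x y) end.

Lemma ss_rel al n : 0 < al -> ss al n = - (INR n + 1) * g al (S n) / al.
Proof.
  intros Ha. induction n.
  - unfold ss. rewrite sum_O, g_S, g_0. simpl. fixR. field. lra.
  - unfold ss in *. rewrite sum_Sn. change (plus ?a ?b) with (a + b). rewrite IHn.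
    rewrite (g_S al (S n)). rewrite S_INR. fixR. assert (0 <= INR n) by apply pos_INR. field; repeat split; lra.
Qed.

Lemma ss_S al n : 0 < al -> ss al (S n) = ss al n * (INR n + 1 - al) / (INR n + 1).
Proof.
  intros Ha. rewrite !ss_rel by auto. rewrite (g_S al (S n)). rewrite !S_INR.
  assert (0 <= INR n) by apply pos_INR. field. lra.
Qed.

Lemma ss_pos al n : 0 < al < 1 -> 0 < ss al n.
Proof.
  intros Ha. induction n.
  - unfold ss. rewrite sum_O, g_0. lra.
  - rewrite ss_S by lra. assert (0 <= INR n) by apply pos_INR.
    apply Rmult_lt_0_compat. apply Rmult_lt_0_compat; auto. lra.
    apply Rinv_0_lt_compat; lra.
Qed.

Lemma ss_dec al n : 0 < al < 1 -> ss al (S n) <= ss al n.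
Proof.
  intros Ha. rewrite ss_S by lra. assert (0 <= INR n) by apply pos_INR.
  assert (0 < ss al n) by (apply ss_pos; auto).
  apply Rmult_le_reg_r with (INR n + 1). lra. field_simplify; nra.
Qed.

Lemma ss_anti al m n : 0 < al < 1 -> (m <= n)%nat -> ss al n <= ss al m.
Proof.
  intros Ha H. induction H. lra. eapply Rle_trans. apply ss_dec; auto. auto.
Qed.

Lemma g_nonpos al k : 0 < al < 1 -> (1 <= k)%nat -> g al k <= 0.
Proof.
  intros Ha Hk. destruct k. lia.
  assert (H := ss_rel al k (proj1 Ha)). assert (0 < ss al k) by (apply ss_pos; auto).
  assert (0 <= INR k) by apply pos_INR.
  assert (g al (S k) = - al * ss al k / (INR k + 1)) by (rewrite H; field; lra).
  rewrite H2. apply Rmult_le_reg_r with (INR k + 1). lra. field_simplify; nra.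
Qed.

Lemma bernoulli (y al : R) : 0 < y -> 0 <= al <= 1 -> Rpower y al <= 1 + al * (y - 1).
Proof.
  intros Hy Ha. unfold Rpower. set (L := ln y).
  assert (Hy' : exp L = y) by (apply exp_ln; auto).
  set (E := exp (al * L)). assert (HE : 0 < E) by apply exp_pos.
  assert (H1 : exp L = E * exp ((1 - al) * L)) by (unfold E; rewrite <- exp_plus; f_equal; ring).
  assert (H2 : 1 = E * exp (- (al * L))) by (unfold E; rewrite <- exp_plus; rewrite <- exp_0; f_equal; ring).
  assert (H3 := exp_ineq1_le ((1 - al) * L)). assert (H4 := exp_ineq1_le (- (al * L))).
  assert (E * (1 + (1 - al) * L) <= exp L) by (rewrite H1; apply Rmult_le_compat_l; lra).
  assert (E * (1 + - (al * L)) <= 1) by (rewrite H2 at 2; apply Rmult_le_compat_l; lra).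
  rewrite <- Hy'. fold E. nra.
Qed.

Lemma ss_lb al n : 0 < al < 1 -> (1 <= n)%nat -> 1 - al <= ss al n * Rpower (INR n) al.
Proof.
  intros Ha Hn. induction n. lia.
  destruct n.
  - unfold ss. rewrite sum_Sn, sum_O, g_0, g_1. simpl. rewrite Rpower_1_base'. change (plus ?a ?b) with (a + b). lra.
  - specialize (IHn ltac:(lia)). rewrite ss_S by lra.
    set (m := INR (S n)). assert (Hm : 1 <= m) by (unfold m; rewrite S_INR; assert (0 <= INR n) by apply pos_INR; lra).
    replace (INR (S (S n))) with (m + 1) by (unfold m; rewrite (S_INR (S n)); ring).
    set (y := m / (m + 1)).
    assert (Hy : 0 < y) by (unfold y; apply Rdiv_lt_0_compat; lra).
    assert (Hmy : m = (m + 1) * y) by (unfold y; field; lra).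
    assert (HP : Rpower m al = Rpower (m + 1) al * Rpower y al).
    { rewrite Hmy at 1. rewrite Rpower_mult_distr; auto. lra. }
    assert (HB := bernoulli y al Hy ltac:(lra)).
    assert (Hs : 0 < ss al (S n)) by (apply ss_pos; auto).
    assert (HQ : 0 < Rpower (m + 1) al) by (unfold Rpower; apply exp_pos).
    fold m in IHn. rewrite HP in IHn.
    assert (y - 1 = - / (m + 1)) by (unfold y; field; lra).
    apply Rle_trans with (ss al (S n) * (Rpower (m + 1) al * Rpower y al)); auto.
    replace (ss al (S n) * (m + 1 - al) / (m + 1) * Rpower (m + 1) al) with
      (ss al (S n) * Rpower (m + 1) al * (1 + al * (y - 1))) by (rewrite H; field; lra).
    rewrite <- Rmult_assoc. apply Rmult_le_compat_l; auto. left; apply Rmult_lt_0_compat; auto.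
Qed.


Lemma Rsum_plus (a b : nat -> R) n m : sum_n_m (fun k => a k + b k) n m = sum_n_m a n m + sum_n_m b n m.
Proof. apply (sum_n_m_plus a b). Qed.

Lemma Rsum_scal (c : R) (a : nat -> R) n m : sum_n_m (fun k => c * a k) n m = c * sum_n_m a n m.
Proof. apply (sum_n_m_mult_l c a). Qed.

Lemma Rsum_le_loc (a b : nat -> R) n m : (forall k, (n <= k <= m)%nat -> a k <= b k) ->
  sum_n_m a n m <= sum_n_m b n m.
Proof.
  intros H.
  rewrite (sum_n_m_ext_loc a (fun k => if andb (n <=? k)%nat (k <=? m)%nat then a k else 0)).
  rewrite (sum_n_m_ext_loc b (fun k => if andb (n <=? k)%nat (k <=? m)%nat then b k else 0)).
  apply sum_n_m_le. intros k. destruct (andb _ _) eqn:E; [|lra].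
  apply Bool.andb_true_iff in E. destruct E as [E1 E2]. apply Nat.leb_le in E1, E2. auto.
  all: intros k Hk; replace (andb _ _) with true; auto; symmetry; apply Bool.andb_true_iff; split; apply Nat.leb_le; lia.
Qed.

Lemma Rsum_ext_loc (a b : nat -> R) n m : (forall k, (n <= k <= m)%nat -> a k = b k) ->
  sum_n_m a n m = sum_n_m b n m.
Proof. apply sum_n_m_ext_loc. Qed.

Lemma sum_n_split2 (f : nat -> R) n : sum_n f (S n) = f 0%nat + (f 1%nat + sum_n_m f 2 (S n)).
Proof.
  unfold sum_n. rewrite (sum_Sn_m f 0 (S n)) by lia. rewrite (sum_Sn_m f 1 (S n)) by lia. reflexivity.
Qed.

Lemma sum_n_split1 (f : nat -> R) n : sum_n f (S n) = f 0%nat + sum_n_m f 1 (S n).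
Proof. unfold sum_n. rewrite (sum_Sn_m f 0 (S n)) by lia. reflexivity. Qed.

Lemma frac_ineq (al aa be : R) (gg : nat -> R) (G : nat -> nat -> R) (n : nat) :
  0 < al < 1 -> (1 <= n)%nat -> 0 <= be -> be <= al * aa -> 0 <= aa ->
  gg 0%nat = 1 -> gg 1%nat = - al -> (forall k, (1 <= k)%nat -> gg k <= 0) -> 0 <= sum_n gg n ->
  (forall p q, (p <= n)%nat -> (q <= n)%nat -> 2 * G p q <= G p p + G q q) ->
  (forall p, (p <= n)%nat -> 0 <= G p p) ->
  (forall p q, (p <= n)%nat -> (q <= n)%nat -> G p q = G q p) ->
  (aa + be) / 2 * sum_n (fun k => gg k * G (n - k)%nat (n - k)%nat) n
  <= sum_n (fun k => gg k * (aa * G (n - k)%nat n + be * G (n - k)%nat (n - 1)%nat)) n.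
Proof.
  intros Ha Hn Hb Hba Haa H0 H1 Hneg Hs HC Hpos Hsym.
  destruct n as [|m]; [lia|].
  rewrite !sum_n_split2. rewrite sum_n_split2 in Hs.
  rewrite H0, H1 in *. replace (S m - 0)%nat with (S m) by lia. replace (S m - 1)%nat with m by lia.
  set (P := sum_n_m gg 2 (S m)).
  set (Gn := G (S m) (S m)). set (G1 := G m m). set (X := G m (S m)).
  assert (HX : G (S m) m = X) by (apply Hsym; lia).
  rewrite HX.
  assert (Hterm : sum_n_m (fun k => (aa + be) / 2 * (gg k * G (S m - k)%nat (S m - k)%nat) + (aa / 2 * Gn + be / 2 * G1) * gg k) 2 (S m)
     <= sum_n_m (fun k => gg k * (aa * G (S m - k)%nat (S m) + be * G (S m - k)%nat m)) 2 (S m)).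
  { apply Rsum_le_loc. intros k Hk.
    assert (Hg : gg k <= 0) by (apply Hneg; lia).
    assert (A1 : 2 * G (S m - k)%nat (S m) <= G (S m - k)%nat (S m - k)%nat + Gn) by (apply HC; lia).
    assert (A2 : 2 * G (S m - k)%nat m <= G (S m - k)%nat (S m - k)%nat + G1) by (apply HC; lia).
    assert (B1 : 0 <= (- gg k * aa) * (G (S m - k)%nat (S m - k)%nat + Gn - 2 * G (S m - k)%nat (S m)))
      by (apply Rmult_le_pos; nra).
    assert (B2 : 0 <= (- gg k * be) * (G (S m - k)%nat (S m - k)%nat + G1 - 2 * G (S m - k)%nat m))
      by (apply Rmult_le_pos; nra).
    nra. }
  rewrite Rsum_plus, Rsum_scal, Rsum_scal in Hterm. fold P in Hterm.
  assert (HGn : 0 <= Gn) by (apply Hpos; lia). assert (HG1 : 0 <= G1) by (apply Hpos; lia).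
  assert (HX2 : 2 * X <= G1 + Gn) by (apply HC; lia).
  assert (Q1 : 0 <= (al * aa - be) * (Gn + G1 - 2 * X)) by (apply Rmult_le_pos; lra).
  assert (Hs' : 0 <= 1 + (- al + P)) by exact Hs.
  assert (Q2 : 0 <= aa * Gn * (1 + (- al + P))) by (apply Rmult_le_pos; [apply Rmult_le_pos|]; lra).
  assert (Q3 : 0 <= be * G1 * (1 + (- al + P))) by (apply Rmult_le_pos; [apply Rmult_le_pos|]; lra).
  nra.
Qed.

Lemma recur (al : R) (y : nat -> R) (D : R) (n : nat) :
  0 < al < 1 -> 0 <= D -> 0 <= y 0%nat ->
  (forall m, (1 <= m <= n)%nat -> sum_n (fun k => g al k * y (m - k)%nat) m <= D) ->
  forall m, (m <= n)%nat -> y m <= y 0%nat + D / ss al m.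
Proof.
  intros Ha HD Hy0 Hrec m.
  induction m as [m IH] using Wf_nat.lt_wf_ind. intros Hm.
  destruct m as [|m'].
  - assert (0 < ss al 0) by (apply ss_pos; auto).
    assert (0 <= D / ss al 0) by (apply Rdiv_le_0_compat; lra). lra.
  - set (s := ss al (S m')). assert (Hs : 0 < s) by (apply ss_pos; auto).
    set (Z := y 0%nat + D / s).
    assert (HR := Hrec (S m') ltac:(lia)). rewrite sum_n_split1, g_0 in HR.
    replace (S m' - 0)%nat with (S m') in HR by lia.
    assert (Hlow : sum_n_m (fun k => g al k * Z) 1 (S m') <= sum_n_m (fun k => g al k * y (S m' - k)%nat) 1 (S m')).
    { apply Rsum_le_loc. intros k Hk.
      assert (Hg : g al k <= 0) by (apply g_nonpos; auto; lia).
      assert (Hyk : y (S m' - k)%nat <= y 0%nat + D / ss al (S m' - k)) by (apply IH; lia).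
      assert (ss al (S m') <= ss al (S m' - k)) by (apply ss_anti; auto; lia).
      assert (0 < ss al (S m' - k)) by (apply ss_pos; auto).
      assert (D / ss al (S m' - k) <= D / s).
      { unfold Rdiv. apply Rmult_le_compat_l; auto. apply Rinv_le_contravar; auto. }
      unfold Z. nra. }
    rewrite (sum_n_m_ext (fun k => g al k * Z) (fun k => Z * g al k)) in Hlow by (intros; apply Rmult_comm).
    rewrite Rsum_scal in Hlow.
    assert (Hsum : sum_n_m (g al) 1 (S m') = s - 1).
    { assert (HH : sum_n (g al) (S m') = 1 + sum_n_m (g al) 1 (S m')) by (rewrite sum_n_split1, g_0; reflexivity). unfold s, ss. rewrite HH. lra. }
    rewrite Hsum in Hlow.
    assert (HsZ : s * Z = s * y 0%nat + D) by (unfold Z; field; lra).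
    fold s Z. nra.
Qed.


Lemma ip_ext h M f f' w w' : (forall i, (1 <= i <= M - 1)%nat -> f i = f' i) ->
  (forall i, (1 <= i <= M - 1)%nat -> w i = w' i) -> ip h M f w = ip h M f' w'.
Proof.
  intros Hf Hw. unfold ip. f_equal. apply Rsum_ext_loc. intros k Hk. rewrite Hf, Hw; auto.
Qed.

Lemma ip_lin_r h M x c y d z : ip h M x (fun i => c * y i + d * z i) = c * ip h M x y + d * ip h M x z.
Proof.
  unfold ip. rewrite (sum_n_m_ext _ (fun i => c * (x i * y i) + d * (x i * z i))) by (intros; simpl; ring).
  rewrite Rsum_plus, !Rsum_scal. ring.
Qed.

Lemma ip_lin_l h M x c y d z : ip h M (fun i => c * y i + d * z i) x = c * ip h M y x + d * ip h M z x.
Proof.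
  unfold ip. rewrite (sum_n_m_ext _ (fun i => c * (y i * x i) + d * (z i * x i))) by (intros; simpl; ring).
  rewrite Rsum_plus, !Rsum_scal. ring.
Qed.

Lemma ip_sum_l h M (c : nat -> R) (X : nat -> nat -> R) w n :
  ip h M (fun i => sum_n (fun k => c k * X k i) n) w = sum_n (fun k => c k * ip h M (X k) w) n.
Proof.
  induction n.
  - rewrite sum_O. rewrite (ip_ext h M _ (fun i => c 0%nat * X 0%nat i + 0 * X 0%nat i) w w).
    rewrite ip_lin_l. ring. intros; rewrite sum_O; ring. auto.
  - rewrite sum_Sn. change (plus ?a ?b) with (a + b). rewrite <- IHn.
    rewrite (ip_ext h M _ (fun i => 1 * sum_n (fun k => c k * X k i) n + c (S n) * X (S n) i) w w).
    rewrite ip_lin_l. ring. intros; rewrite sum_Sn; change (plus ?a ?b) with (a + b); ring. auto.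
Qed.

Lemma Ax_lin M c y d z i : Ax M (fun j => c * y j + d * z j) i = c * Ax M y i + d * Ax M z i.
Proof. unfold Ax. destruct (andb _ _); field. Qed.

Lemma Ax_sum M (c : nat -> R) (X : nat -> nat -> R) n i :
  Ax M (fun j => sum_n (fun k => c k * X k j) n) i = sum_n (fun k => c k * Ax M (X k) i) n.
Proof.
  induction n.
  - rewrite sum_O. unfold Ax. destruct (andb _ _); rewrite !sum_O; field.
  - rewrite sum_Sn. change (plus ?a ?b) with (a + b). rewrite <- IHn.
    unfold Ax. destruct (andb _ _); rewrite !sum_Sn; change (plus ?a ?b) with (a + b); field.
Qed.

Lemma Ax_in M w i : (1 <= i <= M - 1)%nat -> Ax M w i = (w (i - 1)%nat + 10 * w i + w (i + 1)%nat) / 12.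
Proof.
  intros H. unfold Ax. replace (andb _ _) with true; auto. symmetry. apply Bool.andb_true_iff.
  split; apply Nat.leb_le; lia.
Qed.

Lemma shift_gen (f : nat -> R) m : sum_n_m (fun i => f (i - 1)%nat) 1 m = sum_n_m f 1 m + f 0%nat - f m.
Proof.
  induction m.
  - rewrite !sum_n_m_zero by lia. fixR. change (@zero R_AbelianMonoid) with 0. ring.
  - rewrite !sum_n_Sm by lia. change (plus ?a ?b) with (a + b). rewrite IHm.
    replace (S m - 1)%nat with m by lia. fixR. ring.
Qed.

Definition Sh M (x y : nat -> R) := sum_n_m (fun i => x i * y (i + 1)%nat) 1 (M - 1).
Definition Tm M (x y : nat -> R) := sum_n_m (fun i => x i * y i) 1 (M - 1).
Definition KK h M (x y : nat -> R) := h / 12 * (Sh M x y + 10 * Tm M x y + Sh M y x).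

Lemma shift_xy M (x y : nat -> R) : (2 <= M)%nat -> x 0%nat = 0 -> y M = 0 ->
  sum_n_m (fun i => x (i - 1)%nat * y i) 1 (M - 1) = Sh M x y.
Proof.
  intros HM Hx Hy. unfold Sh.
  assert (H := shift_gen (fun j => x j * y (j + 1)%nat) (M - 1)). cbv beta in H.
  replace (M - 1 + 1)%nat with M in H by lia. rewrite Hx, Hy in H.
  rewrite <- (Rsum_ext_loc (fun i => x (i - 1)%nat * y (i - 1 + 1)%nat)). rewrite H. fixR. ring.
  intros k Hk. replace (k - 1 + 1)%nat with k by lia. reflexivity.
Qed.

Lemma ipAx_K h M x y : (2 <= M)%nat -> x 0%nat = 0 -> x M = 0 -> y 0%nat = 0 -> y M = 0 ->
  ip h M (Ax M x) y = KK h M x y.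
Proof.
  intros HM Hx0 HxM Hy0 HyM. unfold ip, KK.
  rewrite (Rsum_ext_loc _ (fun i => / 12 * (x (i - 1)%nat * y i) + (10 / 12 * (x i * y i) + / 12 * (y i * x (i + 1)%nat)))).
  rewrite !Rsum_plus, !Rsum_scal. rewrite shift_xy by auto. unfold Tm, Sh. field.
  intros k Hk. rewrite Ax_in by lia. field.
Qed.

Lemma KK_sym h M x y : KK h M x y = KK h M y x.
Proof.
  unfold KK. assert (Tm M x y = Tm M y x).
  { unfold Tm. apply Rsum_ext_loc. intros; ring. }
  rewrite H. ring.
Qed.

Lemma sum_bil (a b c d : nat -> R) n m :
  sum_n_m (fun i => (a i - b i) * (c i - d i)) n m =
  sum_n_m (fun i => a i * c i) n m - sum_n_m (fun i => a i * d i) n m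
  - sum_n_m (fun i => b i * c i) n m + sum_n_m (fun i => b i * d i) n m.
Proof.
  rewrite (sum_n_m_ext _ (fun i => a i * c i + ((-1) * (a i * d i) + ((-1) * (b i * c i) + b i * d i))))
    by (intros; simpl; ring).
  rewrite !Rsum_plus, !Rsum_scal. fixR. ring.
Qed.

Lemma KK_sub h M x y : KK h M (fun i => x i - y i) (fun i => x i - y i) = KK h M x x + KK h M y y - 2 * KK h M x y.
Proof.
  unfold KK, Sh, Tm.
  rewrite !(sum_bil x y (fun i => x (i + 1)%nat) (fun i => y (i + 1)%nat)).
  rewrite !(sum_bil x y x y).
  rewrite (Rsum_ext_loc (fun i => y i * x i) (fun i => x i * y i)) by (intros; ring).
  fixR. ring.
Qed.

Lemma KK_bounds h M x : 0 < h -> (2 <= M)%nat -> x 0%nat = 0 -> x M = 0 ->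
  2 / 3 * nrm2 h M x <= KK h M x x /\ KK h M x x <= nrm2 h M x.
Proof.
  intros Hh HM H0 HMx. unfold nrm2, ip. fold (Tm M x x).
  assert (H := shift_gen (fun j => x (j + 1)%nat * x (j + 1)%nat) (M - 1)). cbv beta in H.
  replace (M - 1 + 1)%nat with M in H by lia. rewrite HMx in H.
  rewrite (Rsum_ext_loc (fun i => x (i - 1 + 1)%nat * x (i - 1 + 1)%nat) (fun i => x i * x i)) in H
    by (intros k Hk; replace (k - 1 + 1)%nat with k by lia; reflexivity).
  replace (0 + 1)%nat with 1%nat in H by reflexivity.
  set (U := sum_n_m (fun j => x (j + 1)%nat * x (j + 1)%nat) 1 (M - 1)) in H.
  assert (HU : U <= Tm M x x). { unfold Tm. rewrite H. nra. }
  assert (H1 : 2 * Sh M x x <= Tm M x x + U).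
  { unfold Sh, Tm, U. rewrite <- Rsum_plus, <- Rsum_scal. apply Rsum_le_loc. intros k Hk. cbv beta. pose proof (Rle_0_sqr (x k - x (k+1)%nat)). unfold Rsqr in *. nra. }
  assert (H2 : - (2 * Sh M x x) <= Tm M x x + U).
  { unfold Sh, Tm, U. rewrite <- Rsum_plus, <- Rsum_scal.
    rewrite <- (Rmult_1_l (sum_n_m _ 1 (M - 1))). rewrite Ropp_mult_distr_l, <- Rsum_scal.
    apply Rsum_le_loc. intros k Hk. cbv beta. pose proof (Rle_0_sqr (x k + x (k+1)%nat)). unfold Rsqr in *. nra. }
  unfold KK. split; nra.
Qed.

Lemma sum_nonneg (a : nat -> R) n m : (forall k, (n <= k <= m)%nat -> 0 <= a k) -> 0 <= sum_n_m a n m.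
Proof.
  intros H. replace 0 with (sum_n_m (fun _ => 0) n m). apply Rsum_le_loc; auto.
  rewrite (sum_n_m_ext _ (fun k => 0 * 0)) by (intros; simpl; ring). rewrite Rsum_scal. fixR. ring.
Qed.

Lemma nrm2_nonneg h M x : 0 <= h -> 0 <= nrm2 h M x.
Proof.
  intros Hh. unfold nrm2, ip. apply Rmult_le_pos; auto. apply sum_nonneg. intros. apply Rle_0_sqr.
Qed.

Lemma KK_cs h M x y : 0 < h -> (2 <= M)%nat -> x 0%nat = 0 -> x M = 0 -> y 0%nat = 0 -> y M = 0 ->
  2 * KK h M x y <= KK h M x x + KK h M y y.
Proof.
  intros Hh HM Hx0 HxM Hy0 HyM.
  assert (H := KK_bounds h M (fun i => x i - y i) Hh HM ltac:(lra) ltac:(lra)).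
  rewrite KK_sub in H.
  assert (0 <= nrm2 h M (fun i => x i - y i)) by (apply nrm2_nonneg; lra).
  lra.
Qed.


Lemma Ax_ext M f f' i : (forall j, f j = f' j) -> Ax M f i = Ax M f' i.
Proof. intros H. unfold Ax. rewrite !H. reflexivity. Qed.

Lemma Ax_scal M c f i : Ax M (fun j => c * f j) i = c * Ax M f i.
Proof. unfold Ax. destruct (andb _ _); field. Qed.

Lemma Rsumn_scal (c : R) (a : nat -> R) n : sum_n (fun k => c * a k) n = c * sum_n a n.
Proof. apply (sum_n_mult_l c a). Qed.

Lemma nrm2_scal h M c x : nrm2 h M (fun i => c * x i) = c * c * nrm2 h M x.
Proof.
  unfold nrm2, ip. rewrite (sum_n_m_ext _ (fun i => (c * c) * (x i * x i))) by (intros; simpl; ring).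
  rewrite Rsum_scal. ring.
Qed.

Lemma fold_max_ge (l : list R) d x : In x l -> x <= fold_right Rmax d l.
Proof.
  induction l; simpl; [tauto|]. intros [->|H].
  - apply Rmax_l.
  - eapply Rle_trans. apply IHl; auto. apply Rmax_r.
Qed.

Lemma maxn0_ge f N m : (m <= N)%nat -> f m <= maxn0 f N.
Proof.
  intros H. unfold maxn0. apply fold_max_ge. apply in_map. apply in_seq. lia.
Qed.

Lemma ip_young h M C F w : 0 < h -> 0 < C -> ip h M F w <= C * nrm2 h M w + nrm2 h M F / (4 * C).
Proof.
  intros Hh HC. unfold nrm2, ip.
  assert (sum_n_m (fun i => F i * w i) 1 (M - 1) <= C * sum_n_m (fun i => w i * w i) 1 (M - 1) + / (4 * C) * sum_n_m (fun i => F i * F i) 1 (M - 1)).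
  { rewrite <- !Rsum_scal, <- Rsum_plus. apply Rsum_le_loc. intros k Hk.
    pose proof (Rle_0_sqr (2 * C * w k - F k)). unfold Rsqr in *.
    apply Rmult_le_reg_l with (4 * C). lra. field_simplify; [|lra]. 
    apply Rmult_le_reg_r with 1; [lra|]. nra. }
  apply Rmult_le_compat_l with (r := h) in H; [|lra].
  replace (h * (C * sum_n_m (fun i : nat => w i * w i) 1 (M - 1)) + h * sum_n_m (fun i : nat => F i * F i) 1 (M - 1) / (4 * C))
    with (h * (C * sum_n_m (fun i : nat => w i * w i) 1 (M - 1) + / (4 * C) * sum_n_m (fun i : nat => F i * F i) 1 (M - 1))) by (field; lra).
  lra.
Qed.

Lemma exp_mono x y : x <= y -> exp x <= exp y.
Proof. intros H. destruct (Rle_lt_or_eq_dec _ _ H). left; apply exp_increasing; auto. subst; lra. Qed.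


Theorem theorem4p1
  (alpha lambda T a b C : R) (N M : nat)
  (v0 : R -> R) (S : nat -> nat -> R) (v : nat -> nat -> R)
  (Halpha : 0 < alpha < 1) (HT : 0 < T) (Hab : a < b)
  (HN : (2 <= N)%nat) (HM : (2 <= M)%nat)
  (HC : 0 < C)
  (HCOmega : forall (M' : nat) (w : nat -> R), (1 <= M')%nat ->
      w O = 0 -> w M' = 0 ->
      - ip ((b - a) / INR M') M' (d2x ((b - a) / INR M') w) w
        >= C * nrm2 ((b - a) / INR M') M' w)
  (Hv0a : v0 a = 0) (Hv0b : v0 b = 0)
  (Hscheme : forall n i, (1 <= i <= M - 1)%nat -> (1 <= n <= N)%nat ->
      Ax M (fun j => dt alpha lambda (T / INR N) v n j) i
      - At alpha (fun m j => d2x ((b - a) / INR M) (v m) j) n i = S n i)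
  (Hbc0 : forall n, (1 <= n <= N)%nat -> v n O = 0)
  (HbcM : forall n, (1 <= n <= N)%nat -> v n M = 0)
  (Hinit : forall i, (i <= M)%nat -> v O i = v0 (a + INR i * ((b - a) / INR M)))
  (Hcond : 2 - alpha - exp (lambda * (T / INR N)) >= 0) :
  forall n : nat, (1 < n <= N)%nat ->
    nrm (((b - a) / INR M)) M (v n) ^ 2
    <= 3 / 2 * exp (2 * Rabs lambda * T) * nrm ((b - a) / INR M) M (v O) ^ 2
       + 3 * Gamma (1 - alpha) * Rpower T alpha * exp (2 * Rabs lambda * T) / C
         * maxn0 (fun m => nrm ((b - a) / INR M) M (S m) ^ 2) N.
Proof.
  intros n Hn. rename S into Sr. rename N into NN.
  set (h := (b - a) / INR M) in *.
  set (tau := T / INR NN) in *.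
  set (mu := lambda * tau).
  assert (HMr : 2 <= INR M) by (replace 2 with (INR 2) by (simpl; ring); apply le_INR; auto).
  assert (HNr : 2 <= INR NN) by (replace 2 with (INR 2) by (simpl; ring); apply le_INR; auto).
  assert (Hh : 0 < h) by (unfold h; apply Rdiv_lt_0_compat; lra).
  assert (Htau : 0 < tau) by (unfold tau; apply Rdiv_lt_0_compat; lra).
  assert (HTN : T = INR NN * tau) by (unfold tau; field; lra).
  set (u := fun m i => exp (INR m * mu) * v m i).
  assert (Hbd : forall m, (m <= NN)%nat -> u m 0%nat = 0 /\ u m M = 0).
  { intros m Hm. unfold u. destruct m as [|m].
    - rewrite !Hinit by lia. simpl INR. rewrite !Rmult_0_l, Rplus_0_r, Hv0a.
      replace (a + INR M * h) with b by (unfold h; field; lra). rewrite Hv0b. split; ring.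
    - rewrite Hbc0, HbcM by lia. split; ring. }
  set (aa := 1 - alpha / 2). set (be := alpha / 2 * exp mu).
  set (kap := Rpower tau (- alpha) * exp (alpha * mu / 2)).
  assert (Hkap : 0 < kap) by (unfold kap; apply Rmult_lt_0_compat; [apply Rpower_pos'|apply exp_pos]).
  assert (Hsch : forall m i, (1 <= i <= M - 1)%nat -> (1 <= m <= NN)%nat ->
    kap * Ax M (fun j => sum_n (fun k => g alpha k * u (m - k)%nat j) m) i
    + (-1) * d2x h (fun j => aa * u m j + be * u (m - 1)%nat j) i = exp (INR m * mu) * Sr m i).
  { intros m i Hi Hm. set (E := exp (INR m * mu)). assert (HE : 0 < E) by apply exp_pos.
    specialize (Hscheme m i Hi Hm).
    assert (C1 : forall j, dt alpha lambda tau v m j = Rpower tau (- alpha) * (exp (alpha * mu / 2) * / E) * sum_n (fun k => g alpha k * u (m - k)%nat j) m).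
    { intros j. unfold dt. rewrite Rmult_assoc. f_equal. rewrite <- Rsumn_scal.
      apply sum_n_ext_loc. intros k Hk. fixR. unfold gl, u. rewrite minus_INR by lia.
      replace (exp (- (INR k - alpha / 2) * lambda * tau)) with (exp (alpha * mu / 2) * / E * exp ((INR m - INR k) * mu)).
      ring. unfold E. rewrite <- exp_Ropp, <- !exp_plus. f_equal. unfold mu. field. }
    rewrite (Ax_ext M _ (fun j => Rpower tau (- alpha) * (exp (alpha * mu / 2) * / E) * sum_n (fun k => g alpha k * u (m - k)%nat j) m)) in Hscheme by apply C1.
    rewrite Ax_scal in Hscheme.
    assert (C2 : At alpha (fun m0 j => d2x h (v m0) j) m i = / E * d2x h (fun j => aa * u m j + be * u (m - 1)%nat j) i).
    { unfold At, d2x, u, aa, be. rewrite minus_INR by lia. simpl INR.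
      replace (exp ((INR m - 1) * mu)) with (E * / exp mu).
      fold E. field. split; [|split]; try lra. apply Rgt_not_eq, exp_pos.
      unfold E. rewrite <- exp_Ropp, <- exp_plus. f_equal. ring. }
    rewrite C2 in Hscheme. rewrite <- Hscheme. unfold kap. field. lra. }
  set (GG := fun p q => KK h M (u p) (u q)).
  set (y := fun p => GG p p).
  assert (Hexp2 : exp mu <= 2 - alpha) by (unfold mu; lra).
  assert (Hbe0 : 0 <= be) by (unfold be; assert (0 < exp mu) by apply exp_pos; nra).
  assert (Hbe1 : be <= alpha * aa) by (unfold be, aa; nra).
  assert (Haa : 0 <= aa) by (unfold aa; lra).
  assert (Hypos : forall p, (p <= NN)%nat -> 2 / 3 * nrm2 h M (u p) <= y p /\ y p <= nrm2 h M (u p)).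
  { intros p Hp. destruct (Hbd p Hp). apply KK_bounds; auto. }
  assert (En : forall m, (1 <= m <= NN)%nat ->
    kap * ((aa + be) / 2 * sum_n (fun k => g alpha k * y (m - k)%nat) m)
    <= nrm2 h M (fun i => exp (INR m * mu) * Sr m i) / (4 * C)).
  { intros m Hm.
    set (w := fun j => aa * u m j + be * u (m - 1)%nat j).
    set (F := fun i => exp (INR m * mu) * Sr m i).
    set (Q := fun j => sum_n (fun k => g alpha k * u (m - k)%nat j) m).
    destruct (Hbd m ltac:(lia)) as [Hm0 HmM]. destruct (Hbd (m - 1)%nat ltac:(lia)) as [Hm10 Hm1M].
    assert (Hw0 : w 0%nat = 0) by (unfold w; rewrite Hm0, Hm10; ring).
    assert (HwM : w M = 0) by (unfold w; rewrite HmM, Hm1M; ring).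
    assert (T1 : kap * ip h M (Ax M Q) w + (-1) * ip h M (d2x h w) w = ip h M F w).
    { rewrite <- (ip_lin_l h M w kap (Ax M Q) (-1) (d2x h w)). apply ip_ext; auto.
      intros i Hi. unfold F, Q, w. apply Hsch; auto. }
    assert (T2 : ip h M (Ax M Q) w = sum_n (fun k => g alpha k * (aa * GG (m - k)%nat m + be * GG (m - k)%nat (m - 1)%nat)) m).
    { rewrite (ip_ext h M (Ax M Q) (fun i => sum_n (fun k => g alpha k * (fun k0 i0 => Ax M (u (m - k0)%nat) i0) k i) m) w w).
      rewrite (ip_sum_l h M (g alpha) (fun k0 i0 => Ax M (u (m - k0)%nat) i0) w m).
      apply sum_n_ext_loc. intros k Hk. fixR. unfold w. rewrite ip_lin_r.
      destruct (Hbd (m - k)%nat ltac:(lia)) as [Hk0 HkM].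
      unfold GG. rewrite !ipAx_K; auto.
      intros i Hi. unfold Q. apply (Ax_sum M (g alpha) (fun k0 j => u (m - k0)%nat j) m i).
      auto. }
    assert (T3 : (aa + be) / 2 * sum_n (fun k => g alpha k * GG (m - k)%nat (m - k)%nat) m
       <= sum_n (fun k => g alpha k * (aa * GG (m - k)%nat m + be * GG (m - k)%nat (m - 1)%nat)) m).
    { apply (frac_ineq alpha); auto; try lia.
      - apply g_0. - apply g_1. - intros; apply g_nonpos; auto.
      - left. apply (ss_pos alpha m Halpha).
      - intros p q Hp Hq. destruct (Hbd p ltac:(lia)), (Hbd q ltac:(lia)). apply KK_cs; auto.
      - intros p Hp. destruct (Hypos p ltac:(lia)). assert (0 <= nrm2 h M (u p)) by (apply nrm2_nonneg; lra).
        unfold y in *. lra.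
      - intros; apply KK_sym. }
    assert (T4 := HCOmega M w ltac:(lia) Hw0 HwM). fold h in T4.
    assert (T5 := ip_young h M C F w Hh HC).
    assert (kap * ((aa + be) / 2 * sum_n (fun k => g alpha k * GG (m - k)%nat (m - k)%nat) m) <= kap * ip h M (Ax M Q) w).
    { rewrite T2. apply Rmult_le_compat_l; lra. }
    unfold y. fold F. lra. }
  set (Smax := maxn0 (fun m => nrm h M (Sr m) ^ 2) NN).
  assert (HSm : forall m, (m <= NN)%nat -> nrm2 h M (Sr m) <= Smax).
  { intros m Hm. assert (Hq : nrm h M (Sr m) ^ 2 = nrm2 h M (Sr m)) by (unfold nrm; apply pow2_sqrt; apply nrm2_nonneg; lra).
    rewrite <- Hq. apply (maxn0_ge (fun m => nrm h M (Sr m) ^ 2)); auto. }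
  assert (HS0 : 0 <= Smax) by (eapply Rle_trans; [apply (nrm2_nonneg h M (Sr 0%nat)); lra | apply (HSm 0%nat); lia]).
  set (gam := aa + be). assert (Hgam : (2 - alpha) / 2 <= gam) by (unfold gam, aa; lra).
  assert (Hgam0 : 0 < gam) by lra.
  assert (Hn1 : 1 <= INR n) by (replace 1 with (INR 1) by (simpl; ring); apply le_INR; lia).
  assert (HnN : INR n <= INR NN) by (apply le_INR; lia).
  set (Xn := exp (2 * INR n * mu + 2 * (INR n - 1) * Rabs mu)).
  assert (HXn : 0 < Xn) by apply exp_pos.
  set (D := Xn * Smax / (4 * C) * (2 / (kap * gam))).
  assert (HD : 0 <= D).
  { unfold D. apply Rmult_le_pos. apply Rmult_le_pos. apply Rmult_le_pos; lra. left; apply Rinv_0_lt_compat; lra.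
    left. apply Rdiv_lt_0_compat; [lra|]. apply Rmult_lt_0_compat; lra. }
  assert (Hrec : forall m, (1 <= m <= n)%nat -> sum_n (fun k => g alpha k * y (m - k)%nat) m <= D).
  { intros m Hm. specialize (En m ltac:(lia)). rewrite nrm2_scal in En.
    assert (Hm1 : 1 <= INR m) by (replace 1 with (INR 1) by (simpl; ring); apply le_INR; lia).
    assert (Hmn : INR m <= INR n) by (apply le_INR; lia).
    assert (HE : exp (INR m * mu) * exp (INR m * mu) <= Xn).
    { rewrite <- exp_plus. unfold Xn. apply exp_mono. destruct (Rle_dec 0 mu).
      - rewrite Rabs_right by lra. nra.
      - rewrite Rabs_left by lra. nra. }
    assert (HSr := HSm m ltac:(lia)).
    assert (Hn2 : 0 <= nrm2 h M (Sr m)) by (apply nrm2_nonneg; lra).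
    assert (H1 : kap * (gam / 2 * sum_n (fun k => g alpha k * y (m - k)%nat) m) <= Xn * Smax / (4 * C)).
    { eapply Rle_trans. apply En. unfold Rdiv. apply Rmult_le_compat_r. left; apply Rinv_0_lt_compat; lra.
      apply Rmult_le_compat; auto. apply Rmult_le_pos; left; apply exp_pos. }
    replace (sum_n (fun k => g alpha k * y (m - k)%nat) m) with
      (kap * (gam / 2 * sum_n (fun k => g alpha k * y (m - k)%nat) m) * (2 / (kap * gam))) by (field; lra).
    unfold D. apply Rmult_le_compat_r; auto. left. apply Rdiv_lt_0_compat; [lra|]. apply Rmult_lt_0_compat; lra. }
  assert (Hy0 : 0 <= y 0%nat).
  { destruct (Hypos 0%nat ltac:(lia)). assert (0 <= nrm2 h M (u 0%nat)) by (apply nrm2_nonneg; lra). lra. }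
  assert (Hyn := recur alpha y D n Halpha HD Hy0 Hrec n (le_n n)).
  unfold nrm. rewrite !pow2_sqrt by (apply nrm2_nonneg; lra).
  set (Enn := exp (INR n * mu)). assert (HEn : 0 < Enn) by apply exp_pos.
  assert (Hun : nrm2 h M (u n) = Enn * Enn * nrm2 h M (v n)) by (unfold u; rewrite nrm2_scal; reflexivity).
  assert (Hu0 : nrm2 h M (u 0%nat) = nrm2 h M (v 0%nat)).
  { unfold u. rewrite nrm2_scal. simpl INR. rewrite Rmult_0_l, exp_0. ring. }
  destruct (Hypos n ltac:(lia)) as [Hyn1 _]. destruct (Hypos 0%nat ltac:(lia)) as [_ Hy02].
  set (s := ss alpha n) in *. assert (Hs : 0 < s) by (apply ss_pos; auto).
  set (ET := exp (2 * Rabs lambda * T)).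
  assert (Hmu : Rabs mu = Rabs lambda * tau) by (unfold mu; rewrite Rabs_mult, (Rabs_right tau); lra).
  assert (HLT : Rabs lambda * T = INR NN * Rabs mu) by (rewrite Hmu, HTN; ring).
  assert (Hamu : 0 <= Rabs mu) by apply Rabs_pos.
  assert (Hmuabs : - mu <= Rabs mu) by (rewrite <- Rabs_Ropp; apply Rle_abs).
  assert (Hvn : nrm2 h M (v n) <= 3 / 2 * / (Enn * Enn) * (nrm2 h M (v 0%nat) + D / s)).
  { assert (nrm2 h M (u n) <= 3 / 2 * (nrm2 h M (v 0%nat) + D / s)) by lra.
    rewrite Hun in H. apply Rmult_le_reg_l with (Enn * Enn). nra.
    replace (Enn * Enn * (3 / 2 * / (Enn * Enn) * (nrm2 h M (v 0%nat) + D / s))) with (3 / 2 * (nrm2 h M (v 0%nat) + D / s)) by (field; lra).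
    lra. }
  assert (B1 : / (Enn * Enn) <= ET).
  { unfold Enn, ET. rewrite <- exp_plus, <- exp_Ropp. apply exp_mono. replace (2 * Rabs lambda * T) with (2 * (Rabs lambda * T)) by ring. rewrite HLT. nra. }
  assert (Hv0n : 0 <= nrm2 h M (v 0%nat)) by (apply nrm2_nonneg; lra).
  set (Rt := Rpower tau alpha). assert (HRt : 0 < Rt) by apply Rpower_pos'.
  set (RT := Rpower T alpha). assert (HRT : 0 < RT) by apply Rpower_pos'.
  set (Z := exp (2 * (INR n - 1) * Rabs mu) * exp (- (alpha * mu / 2))).
  assert (HZ : Z <= ET).
  { unfold Z, ET. rewrite <- exp_plus. apply exp_mono. replace (2 * Rabs lambda * T) with (2 * (Rabs lambda * T)) by ring. rewrite HLT. nra. }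
  assert (HZ0 : 0 <= Z) by (unfold Z; apply Rmult_le_pos; left; apply exp_pos).
  assert (Eq2 : 3 / 2 * / (Enn * Enn) * (D / s) = 3 / 4 * Z * (Rt / s) * / gam * Smax / C).
  { assert (Hx : Xn = Enn * Enn * exp (2 * (INR n - 1) * Rabs mu)) by (unfold Xn, Enn; rewrite <- !exp_plus; f_equal; ring).
    assert (Hk : / kap = Rt * exp (- (alpha * mu / 2))).
    { unfold kap, Rt. rewrite Rpower_Ropp, exp_Ropp. field. split; apply Rgt_not_eq; [apply exp_pos|apply Rpower_pos']. }
    unfold D. rewrite Hx. unfold Z.
    replace (2 / (kap * gam)) with (2 * / kap * / gam) by (field; lra). rewrite Hk. field. lra. }
  assert (HRts : Rt / s <= RT / (1 - alpha)).
  { assert (Hlb := ss_lb alpha n Halpha ltac:(lia)). fold s in Hlb.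
    assert (HP : Rt * Rpower (INR n) alpha <= RT).
    { unfold Rt, RT. rewrite Rpower_mult_distr by lra. apply Rle_Rpower_l; [lra|]. split; [nra|]. rewrite HTN. nra. }
    assert (0 < Rpower (INR n) alpha) by apply Rpower_pos'.
    apply Rmult_le_reg_r with (s * (1 - alpha)). nra.
    replace (Rt / s * (s * (1 - alpha))) with (Rt * (1 - alpha)) by (field; lra).
    replace (RT / (1 - alpha) * (s * (1 - alpha))) with (RT * s) by (field; lra).
    nra. }
  assert (Hig : / gam <= 2 / (2 - alpha)).
  { apply Rmult_le_reg_r with (gam * (2 - alpha)). nra.
    replace (/ gam * (gam * (2 - alpha))) with (2 - alpha) by (field; lra).
    replace (2 / (2 - alpha) * (gam * (2 - alpha))) with (2 * gam) by (field; lra). lra. }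
  assert (HGa := Gamma_lb alpha Halpha).
  assert (B2 : 3 / 4 * Z * (Rt / s) * / gam * Smax / C <= 3 * Gamma (1 - alpha) * RT * ET / C * Smax).
  { apply Rle_trans with (3 / 4 * ET * (RT / (1 - alpha)) * (2 / (2 - alpha)) * Smax / C).
    - assert (0 <= Rt / s) by (apply Rdiv_le_0_compat; lra).
      assert (0 <= / gam) by (left; apply Rinv_0_lt_compat; lra).
      assert (HAB : 3 / 4 * Z * (Rt / s) * / gam <= 3 / 4 * ET * (RT / (1 - alpha)) * (2 / (2 - alpha))).
      { apply Rmult_le_compat.
        - apply Rmult_le_pos; auto. apply Rmult_le_pos; lra.
        - auto.
        - apply Rmult_le_compat; auto. apply Rmult_le_pos; lra. apply Rmult_le_compat_l; lra.
        - auto. }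
      assert (0 <= Smax / C) by (apply Rdiv_le_0_compat; lra).
      replace (3 / 4 * Z * (Rt / s) * / gam * Smax / C) with ((3 / 4 * Z * (Rt / s) * / gam) * (Smax / C)) by (field; lra).
      replace (3 / 4 * ET * (RT / (1 - alpha)) * (2 / (2 - alpha)) * Smax / C) with ((3 / 4 * ET * (RT / (1 - alpha)) * (2 / (2 - alpha))) * (Smax / C)) by (field; lra).
      apply Rmult_le_compat_r; auto.
    - replace (3 / 4 * ET * (RT / (1 - alpha)) * (2 / (2 - alpha)) * Smax / C) with
        (3 * (1 / (2 * (1 - alpha) * (2 - alpha))) * RT * ET / C * Smax) by (field; lra).
      unfold Rdiv. apply Rmult_le_compat_r; auto. apply Rmult_le_compat_r. left; apply Rinv_0_lt_compat; lra.
      assert (0 < ET) by apply exp_pos. apply Rmult_le_compat_r; [lra|]. apply Rmult_le_compat_r; [lra|].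
      apply Rmult_le_compat_l; [lra|]. unfold Rdiv in HGa. lra. }
  assert (0 < ET) by apply exp_pos.
  assert (HA : 3 / 2 * / (Enn * Enn) * nrm2 h M (v 0%nat) <= 3 / 2 * ET * nrm2 h M (v 0%nat)).
  { apply Rmult_le_compat_r; auto. apply Rmult_le_compat_l; lra. }
  fold ET RT. lra.
Qed.
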